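(* Let $n\ge 1$ and let $G=P_{n+1}$ be the path $v_1v_2\cdots v_{n+1}$ whose edges $v_iv_{i+1}$ have pairwise distinct weights $w_i\in(0,1)$, $1\le i\le n$. For $1\le i\le n$ let $W_i=\prod_{j\ne i}(w_j-w_i)$. Then for every integer $t\ge n$, \[\Pr\big(\operatorname{ptw}(G,\{v_1\})\le t\big)=w_1w_2\cdots w_n\sum_{i=1}^{n}\frac{(1-w_i)^{n-1}-(1-w_i)^{t}}{w_iW_i},\] and hence, for $\alpha\in(0,1)$, $\operatorname{cptw}(G,\{v_1\},\alpha)$ is the minimum value of $t$ for which this quantity is at least $\alpha$.
   Context: Let $G$ be a finite simple graph in which each edge $uv$ has a weight $w_{uv}\in(0,1)$. Weighted zero forcing: start with a set $B\subseteq V(G)$ of blue vertices, all other vertices white. In each round, simultaneously, for every blue vertex $u$ that has exactly one white neighbor $v$ (with respect to the coloring at the start of the round), $u$ attempts to force $v$, succeeding with probability $w_{uv}$, all attempts being independent; a white vertex becomes blue at the end of the round if at least one attempt on it succeeds. $\operatorname{ptw}(G,B)$ is the random variable giving the round in which the last white vertex becomes blue ($0$ if $B=V(G)$). For $\alpha\in(0,1)$, $\operatorname{cptw}(G,B,\alpha)$ is the least $t\ge 0$ with $\Pr(\operatorname{ptw}(G,B)\le t)\ge\alpha$. *)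

(* Defs.v *)
From HB Require Import structures.
From mathcomp Require Import all_boot all_order all_algebra.
Set Implicit Arguments. Unset Strict Implicit. Unset Printing Implicit Defensive.
Import Order.TTheory GRing.Theory Num.Theory.
Local Open Scope ring_scope.

(* Weighted zero forcing on a finite simple graph given by a symmetric,
   irreflexive relation [adj] on a finType [T], with edge weights [w u v]
   (only queried on edges).  The coloring process is a Markov chain on the
   set of blue vertices; [wzf_dist t S] is the probability that the set of
   blue vertices after t rounds is exactly S. *)
Section WZF.
Variables (R : realFieldType) (T : finType) (adj : rel T) (w : T -> T -> R).

Definition white_nbrs (S : {set T}) (u : T) : {set T} :=
  [set x | adj u x & x \notin S].

Definition forces (S : {set T}) (u v : T) : bool :=
  (u \in S) && (white_nbrs S u == [set v]).

(* probability that at least one attempt on v succeeds *)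
Definition pforce (S : {set T}) (v : T) : R :=
  1 - \prod_(u | forces S u v) (1 - w u v).

Definition wzf_trans (S S' : {set T}) : R :=
  if S \subset S' then
    \prod_(v | v \notin S) (if v \in S' then pforce S v else 1 - pforce S v)
  else 0.

Fixpoint wzf_dist (B : {set T}) (t : nat) : {ffun {set T} -> R} :=
  match t with
  | 0 => [ffun S => (S == B)%:R]
  | t'.+1 => [ffun S' => \sum_(S : {set T}) wzf_dist B t' S * wzf_trans S S']
  end.

Definition prob_ptw_le (B : {set T}) (t : nat) : R := wzf_dist B t setT.

Definition is_cptw (B : {set T}) (alpha : R) (t : nat) : Prop :=
  alpha <= prob_ptw_le B t /\ (forall s, (s < t)%N -> prob_ptw_le B s < alpha).

End WZF.

(* The path P_{n+1} on vertices 'I_n.+1 (vertex v_k is the ordinal k-1). *)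
Definition path_adj (n : nat) : rel 'I_n.+1 :=
  fun u v => (u.+1 == v :> nat) || (v.+1 == u :> nat).

(* edge weights: the edge v_{i+1} v_{i+2} (ordinals i, i+1) gets weight w i,
   for i : 'I_n ; the value on non-edges is irrelevant (0). *)
Definition path_w (R : nzRingType) (n : nat) (w : 'I_n -> R) (u v : 'I_n.+1) : R :=
  if path_adj u v then
    match @insub nat (fun k => k < n)%N _ (minn u v) with
    | Some i => w i | None => 0 end
  else 0.

Definition path_formula (R : realFieldType) (n : nat) (w : 'I_n -> R) (t : nat) : R :=
  (\prod_(i < n) w i) *
  \sum_(i < n) (((1 - w i) ^+ n.-1 - (1 - w i) ^+ t) /
                (w i * \prod_(j < n | j != i) (w j - w i))).

(* Main.v *)
Require Import Defs.
From mathcomp Require Import all_boot all_order all_algebra.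
From mathcomp Require Import zify ring lra.
Import Order.TTheory GRing.Theory Num.Theory.
Local Open Scope ring_scope.
Set Implicit Arguments. Unset Strict Implicit. Unset Printing Implicit Defensive.

Lemma cancel_aux (F : fieldType) (q r a b : F) : b != 0 -> q - r != 0 ->
  q * a / (b * (q - r)) - r * (a / (b * (q - r))) = a / b.
Proof. by move=> hb hc; field; rewrite hb hc. Qed.

Section Alg.
Variables (R : realFieldType) (n : nat) (w : 'I_n -> R).
Hypothesis winj : injective w.

Definition wn (k : nat) : R :=
  match (insub k : option 'I_n) with Some i => w i | None => 0 end.
Definition qn k := 1 - wn k.

Lemma wn_ord (i : 'I_n) : wn i = w i.
Proof. by rewrite /wn valK. Qed.

Lemma wn_ge k : (n <= k)%N -> wn k = 0.
Proof. by move=> h; rewrite /wn insubF // ltnNge h. Qed.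

Lemma qn_neq (i j : nat) : (i < n)%N -> (j < n)%N -> i != j -> qn i - qn j != 0.
Proof.
move=> hi hj hij; have -> : qn i - qn j = wn j - wn i by rewrite /qn; ring.
rewrite subr_eq0 eq_sym.
rewrite -[i]/(nat_of_ord (Ordinal hi)) -[j]/(nat_of_ord (Ordinal hj)) !wn_ord.
apply/eqP => /winj /(congr1 val) /= e; by move: hij; rewrite e eqxx.
Qed.

Definition V k (i : nat) := \prod_(j < k.+1 | j != i :> nat) (qn i - qn j).
Definition g k t := \sum_(i < k.+1) qn i ^+ t / V k i.

Lemma V_neq k (i : 'I_k.+1) : (k < n)%N -> V k i != 0.
Proof.
move=> hk; rewrite /V prodf_seq_neq0; apply/allP => j _; apply/implyP => hj.
have := ltn_ord i; have := ltn_ord j => ??.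
apply: qn_neq => //; lia.
Qed.

Lemma g_rec k t : (k.+1 < n)%N -> g k.+1 t.+1 = qn k.+1 * g k.+1 t + g k t.
Proof.
move=> hk; apply/eqP; rewrite addrC -subr_eq; apply/eqP.
rewrite /g mulr_sumr -sumrB big_ord_recr /=.
rewrite exprS mulrA [qn k.+1 * _]mulrC -mulrA subrr addr0.
apply: eq_bigr => i _.
have hV : V k.+1 i = V k i * (qn i - qn k.+1).
  rewrite /V /= big_mkcond big_ord_recr /= -big_mkcond /=.
  have -> : (k.+1 != i :> nat) = true by rewrite neq_ltn ltn_ord orbT.
  by congr (_ * _); apply: eq_bigl => j.
rewrite hV /=.
have hi := ltn_ord i.
have h1 : V k i != 0 by apply: (@V_neq k i); lia.
have h2 : qn i - qn k.+1 != 0 by apply: qn_neq; [lia|lia|rewrite neq_ltn ltn_ord].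
by rewrite exprS cancel_aux.
Qed.

Lemma g0 k : (0 < k)%N -> (k < n)%N -> g k 0 = 0.
Proof.
move=> k0 kn.
pose x (i : 'I_k.+1) : R := qn i.
pose Q (i : 'I_k.+1) : {poly R} := \prod_(j < k.+1 | j != i) ('X - (x j)%:P).
pose P : {poly R} := \sum_(i < k.+1) (V k i)^-1 *: Q i.
have hQ i : size (Q i) = k.+1.
  rewrite /Q size_prod; last by move=> j _; rewrite polyXsubC_eq0.
  under eq_bigr => j _ do rewrite size_XsubC.
  rewrite sum_nat_const cardC1 card_ord /=; lia.
have hQl i : (Q i)`_k = 1.
  have := lead_coef_prod_XsubC (index_enum 'I_k.+1) (fun j => j != i) x.
  by rewrite /lead_coef -/(Q i) hQ.
have Pval (l : 'I_k.+1) : P.[x l] = 1.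
  rewrite /P horner_sum (bigD1 l) //= big1 ?addr0.
    rewrite hornerZ /Q horner_prod.
    under eq_bigr => j _ do rewrite hornerXsubC.
    by rewrite mulVf // V_neq.
  move=> i hil; rewrite hornerZ /Q horner_prod (bigD1 l) //=.
    by rewrite hornerXsubC subrr mul0r mulr0.
  by rewrite eq_sym.
have P1 : P - 1 = 0.
  apply: (@roots_geq_poly_eq0 _ _ [seq x i | i <- enum 'I_k.+1]).
  - apply/allP => y /mapP [l _ ->]; by rewrite /root hornerD hornerN Pval hornerC subrr.
  - rewrite map_inj_uniq ?enum_uniq // => i j /eqP hij; apply/val_inj/eqP.
    apply: contraTT hij => hij; rewrite -subr_eq0; apply: qn_neq => //; have := ltn_ord i; have := ltn_ord j; lia.
  - rewrite size_map size_enum_ord; apply: (leq_trans (size_polyD _ _)).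
    rewrite size_polyN size_poly1 geq_max ltn0Sn andbT.
    apply: (leq_trans (size_sum _ _ _)); apply/bigmax_leqP => i _.
    by apply: (leq_trans (size_scale_leq _ _)); rewrite hQ.
have : (P - 1)`_k = 0 by rewrite P1 coef0.
rewrite coefB coef1 (negbTE (lt0n_neq0 k0)) subr0 /P coef_sum.
under eq_bigr => i _ do rewrite coefZ hQl mulr1.
move=> h; rewrite /g -[RHS]h; apply: eq_bigr => i _; by rewrite expr0 div1r.
Qed.

Fixpoint pp (t : nat) : nat -> R :=
  match t with
  | 0 => fun k => (k == 0)%:R
  | t'.+1 => fun k => match k with
             | 0 => qn 0 * pp t' 0
             | k'.+1 => qn k'.+1 * pp t' k'.+1 + wn k' * pp t' k'
             end
  end.

Lemma pp_lt t k : (t < k)%N -> pp t k = 0.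
Proof.
elim: t k => [|t IH] [|k] //= h.
by rewrite !IH ?mulr0 ?addr0 //; lia.
Qed.

Definition c k := \prod_(i < k) wn i.
Lemma c_S k : c k.+1 = c k * wn k.
Proof. by rewrite /c big_ord_recr. Qed.

Lemma g0t t : g 0 t = qn 0 ^+ t.
Proof. by rewrite /g big_ord1 /V big_pred0 ?divr1 // => j; rewrite ord1. Qed.

Lemma pp_closed t k : (k < n)%N -> pp t k = c k * g k t.
Proof.
elim: t k => [|t IH] [|k] hk /=.
- by rewrite /c big_ord0 mul1r g0t expr0.
- by rewrite g0 ?mulr0.
- by rewrite IH // /c big_ord0 !mul1r !g0t exprS.
- rewrite !IH; try lia.
  by rewrite g_rec // c_S; ring.
Qed.

Lemma pp_last t k : (n <= k.+1)%N -> pp t k.+1 = \sum_(s < t) wn k * pp s k.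
Proof.
move=> hk; elim: t => [|t IH] /=; first by rewrite big_ord0.
by rewrite big_ord_recr /= -IH /qn wn_ge // subr0 mul1r.
Qed.

Lemma geo (x : R) a m : x ^+ a - x ^+ (m + a) = (1 - x) * \sum_(s < m) x ^+ (s + a).
Proof.
elim: m => [|m IH]; first by rewrite add0n subrr big_ord0 mulr0.
rewrite big_ord_recr mulrDr -IH addSn exprS /=; ring.
Qed.

Lemma sum_pred (F : nat -> R) : (0 < n)%N -> \sum_(i < n.-1.+1) F i = \sum_(i < n) F i.
Proof. by move=> h; rewrite prednK. Qed.

Lemma V_ord (i : nat) : (0 < n)%N -> V n.-1 i = \prod_(j < n | j != i :> nat) (qn i - qn j).
Proof. by move=> h; rewrite /V prednK. Qed.

Hypothesis wnz : forall i, w i != 0.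

Lemma pp_formula t : (0 < n)%N -> (n <= t)%N -> pp t n = path_formula w t.
Proof.
move=> h0 ht.
have -> : pp t n = pp t n.-1.+1 by rewrite prednK.
rewrite pp_last ?prednK //.
have -> : t = (n.-1 + (t - n.-1))%N by lia.
set m := (t - n.-1)%N.
rewrite big_split_ord /= big1 ?add0r; last first.
  by move=> s _; rewrite pp_lt ?mulr0 //= ltn_ord.
rewrite /path_formula.
have -> : \prod_(i<n) w i = c n by rewrite /c; apply: eq_bigr => i _; rewrite wn_ord.
have -> : c n = c n.-1.+1 by rewrite prednK.
have hn : (n.-1 < n)%N by lia.
under eq_bigr => s _ do rewrite pp_closed // mulrA [wn _ * c _]mulrC.
rewrite c_S -mulr_sumr; congr (_ * _).
rewrite /g exchange_big /=.
rewrite (sum_pred (fun i => \sum_(s < m) qn i ^+ (n.-1 + s) / V n.-1 i)) //.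
apply: eq_bigr => i _.
rewrite -mulr_suml V_ord //.
have -> : \prod_(j < n | j != i) (w j - w i) = \prod_(j < n | j != i :> nat) (qn i - qn j).
  by apply: eq_bigr => j _; rewrite /qn !wn_ord; ring.
rewrite [(n.-1 + m)%N]addnC geo (_ : 1 - (1 - w i) = w i); last by ring.
rewrite -mulf_div divff // mul1r.
by congr (_ / _); apply: eq_bigr => s _; rewrite addnC /qn wn_ord.
Qed.
End Alg.

Section Chain.
Variables (R : realFieldType) (n : nat) (w : 'I_n -> R).

Local Notation adj := (@path_adj n).
Local Notation pw := (path_w w).

Definition pre (k : nat) : {set 'I_n.+1} := [set x : 'I_n.+1 | (x <= k)%N].

Lemma path_w_eq u v : pw u v = if adj u v then wn w (minn u v) else 0.
Proof. by []. Qed.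

Lemma preT k : (n <= k)%N -> pre k = setT.
Proof. move=> h; apply/setP => x; rewrite !inE; have := ltn_ord x; lia. Qed.

Lemma pre0 : pre 0 = [set ord0].
Proof. by apply/setP => x; rewrite !inE leqn0. Qed.

Lemma prod01 (I : finType) (P : pred I) (b : pred I) :
  \prod_(i | P i) (if b i then 0 else 1 : R) = [forall i, P i ==> ~~ b i]%:R.
Proof.
case: (boolP [forall i, P i ==> ~~ b i]) => h.
  by rewrite big1 // => i Pi; move/forallP: h => /(_ i); rewrite Pi /= => /negbTE ->.
move: h; rewrite negb_forall => /existsP [i]; rewrite negb_imply negbK => /andP [Pi bi].
by rewrite (bigD1 i) //= bi mul0r.
Qed.

Lemma wnb_pre k (u : 'I_n.+1) : (u <= k)%N ->
  white_nbrs adj (pre k) u = [set x : 'I_n.+1 | (u == k :> nat) && (x == k.+1 :> nat)].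
Proof. move=> hu; apply/setP => x; rewrite !inE /path_adj; lia. Qed.


Lemma forces_pre k (u v : 'I_n.+1) : (k < v)%N ->
  forces adj (pre k) u v = (u == k :> nat) && (v == k.+1 :> nat).
Proof.
move=> hv; rewrite /forces inE.
case: (leqP u k) => hu /=; last by have -> : (u == k :> nat) = false by lia.
rewrite wnb_pre //.
case: (eqVneq (u : nat) k) => huk /=.
  apply/eqP/idP.
    by move=> h; have := set11 v; rewrite -h inE.
  move=> hk; apply/setP => x; rewrite !inE -val_eqE /=; apply/eqP/eqP; lia.
by apply/negP => /eqP h; have := set11 v; rewrite -h inE.
Qed.

Lemma pforce_pre k (v : 'I_n.+1) : (k < v)%N ->
  pforce adj pw (pre k) v = if (v == k.+1 :> nat) then wn w k else 0.
Proof.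
move=> hv; rewrite /pforce.
case: (eqVneq (v : nat) k.+1) => hvk.
  have hk : (k < n.+1)%N by have := ltn_ord v; lia.
  rewrite (big_pred1 (Ordinal hk)); last first.
    by move=> u; rewrite forces_pre // hvk eqxx andbT.
  rewrite path_w_eq /path_adj /= hvk eqxx /=.
  by rewrite (_ : minn k k.+1 = k); [ring | lia].
rewrite big_pred0 ?subrr // => u; rewrite forces_pre //; lia.
Qed.


Lemma trans_pre k (S' : {set 'I_n.+1}) : (k <= n)%N ->
  wzf_trans adj pw (pre k) S' =
  (S' == pre k)%:R * (1 - wn w k) + (S' == pre k.+1)%:R * wn w k.
Proof.
move=> hk; rewrite /wzf_trans.
case: (ltnP k n) => hkn; last first.
  rewrite (preT hkn) (@preT k.+1) ?wn_ge //; last by lia.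
  rewrite subTset big_pred0; last by move=> v; rewrite in_setT.
  by case: (S' == setT); rewrite /= ?mulr0 ?addr0 ?subr0 ?mul1r ?mul0r.
pose j : 'I_n.+1 := Ordinal (hkn : (k.+1 < n.+1)%N).
have jn : j \notin pre k by rewrite inE /=; lia.
rewrite (bigD1 j) //=.
rewrite pforce_pre /=; last by lia.
rewrite eqxx.
rewrite (eq_bigr (fun v => if v \in S' then 0 else 1)); last first.
  move=> v /andP [hv hvj]; rewrite pforce_pre; last by move: hv; rewrite inE; lia.
  move: hvj; rewrite -val_eqE /= => /negbTE ->.
  by rewrite subr0.
rewrite prod01.
have hne : (pre k == pre k.+1) = false.
  apply/negP => /eqP h; move: jn; rewrite h inE /=; by rewrite leqnn.
case: (eqVneq S' (pre k)) => [->|hS1].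
  rewrite subxx (negbTE jn) hne.
  have -> : [forall i, (i \notin pre k) && (i != j) ==> (i \notin pre k)] by apply/forallP => i; apply/implyP => /andP [].
  by rewrite /=; ring.
case: (eqVneq S' (pre k.+1)) => [->|hS2].
  have -> : pre k \subset pre k.+1 by apply/subsetP => x; rewrite !inE; lia.
  have -> : j \in pre k.+1 by rewrite inE /=.
  have -> : [forall i, (i \notin pre k) && (i != j) ==> (i \notin pre k.+1)].
    apply/forallP => i; apply/implyP => /andP []; rewrite !inE -val_eqE /=; lia.
  by rewrite /=; ring.
rewrite (_ : false%:R = 0 :> R) // mul0r mul0r addr0.
case: ifP => // hsub.
case: (boolP [forall i, _]) => hall; last by rewrite mulr0.
have hall' : forall v, v \in S' -> (v <= k.+1)%N.
  move=> v hv; move/forallP: hall => /(_ v); rewrite !inE -val_eqE /= hv; lia.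
case: (boolP (j \in S')) => hj.
  case/eqP: hS2; apply/setP => x; rewrite inE; apply/idP/idP => [/hall' //|hx].
  case: (leqP x k) => hxk; first by apply: (subsetP hsub); rewrite inE.
  by have -> : x = j by apply/val_inj => /=; lia.
case/eqP: hS1; apply/setP => x; rewrite inE; apply/idP/idP => [hx|hx]; last first.
  by apply: (subsetP hsub); rewrite inE.
have := hall' x hx; rewrite leq_eqVlt ltnS => /orP [/eqP hx1|//].
have ex : x = j by apply/val_inj => /=; lia.
by move: hj; rewrite -ex hx.
Qed.


Lemma dist_pre t (S : {set 'I_n.+1}) :
  wzf_dist adj pw [set ord0] t S = \sum_(k < n.+1) (S == pre k)%:R * pp w t k.
Proof.
elim: t S => [|t IH] S /=.
  rewrite ffunE big_ord_recl /= pre0 mulr1 big1 ?addr0 // => i _.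
  by rewrite mulr0.
rewrite ffunE.
under eq_bigr => S0 _ do rewrite IH mulr_suml.
rewrite exchange_big /=.
have E (k : 'I_n.+1) : \sum_i (i == pre k)%:R * pp w t k * wzf_trans adj pw i S =
    pp w t k * wzf_trans adj pw (pre k) S.
  rewrite (bigD1 (pre k)) //= eqxx mul1r big1 ?addr0 // => S1 /negbTE ->.
  by rewrite !mul0r.
rewrite (eq_bigr (fun k : 'I_n.+1 => pp w t k * ((S == pre k)%:R * (1 - wn w k))
   + pp w t k * ((S == pre k.+1)%:R * wn w k))); last first.
  by move=> k _; rewrite E trans_pre ?mulrDr // -ltnS.
rewrite big_split /= big_ord_recl big_ord_recr /= (@wn_ge _ _ w n (leqnn n)) !mulr0 addr0.
rewrite big_ord_recl /= -addrA; congr (_ + _); first by rewrite /qn; ring.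
rewrite -big_split /=; apply: eq_bigr => i _.
by rewrite /bump leq0n add1n add0n /qn; ring.
Qed.

Lemma prob_pp t : prob_ptw_le adj pw [set ord0] t = pp w t n.
Proof.
rewrite /prob_ptw_le dist_pre big_ord_recr /= big1 ?add0r.
  by rewrite (preT (leqnn n)) eqxx mul1r.
move=> i _; rewrite (_ : (setT == pre i) = false) ?mul0r //.
apply/negP => /eqP h.
have hn : (i.+1 < n.+1)%N by rewrite ltnS ltn_ord.
have : Ordinal hn \in pre i by rewrite -h in_setT.
by rewrite inE /= ltnn.
Qed.

End Chain.

Unset Implicit Arguments.

Theorem mainTheorem11 (R : realFieldType) (n : nat) (w : 'I_n -> R) :
  (0 < n)%N ->
  (forall i, 0 < w i < 1) ->
  injective w ->
  (forall t : nat, (n <= t)%N ->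
     prob_ptw_le (@path_adj n) (path_w w) [set ord0] t = path_formula w t) /\
  (forall alpha : R, 0 < alpha < 1 -> forall t : nat,
     is_cptw (@path_adj n) (path_w w) [set ord0] alpha t <->
     [/\ (n <= t)%N, alpha <= path_formula w t &
         forall s : nat, (n <= s < t)%N -> path_formula w s < alpha]).
Proof.
move=> n0 wb winj.
have wnz i : w i != 0 by have /andP [h _] := wb i; rewrite gt_eqF.
have F t : (n <= t)%N -> prob_ptw_le (@path_adj n) (path_w w) [set ord0] t = path_formula w t.
  by move=> ht; rewrite prob_pp (pp_formula winj wnz).
have Z t : (t < n)%N -> prob_ptw_le (@path_adj n) (path_w w) [set ord0] t = 0.
  by move=> ht; rewrite prob_pp pp_lt.
split => // alpha /andP [a0 a1] t; split.
  move=> [h1 h2].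
  have tn : (n <= t)%N.
    rewrite leqNgt; apply/negP => ht; move: h1; rewrite Z //.
    by rewrite leNgt a0.
  split => //; first by rewrite -F.
  by move=> s /andP [s1 s2]; rewrite -F // h2.
move=> [tn h1 h2]; split; first by rewrite F.
move=> s hs; case: (ltnP s n) => hsn; first by rewrite Z.
by rewrite F // h2 // hsn hs.
Qed.
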